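(* Let $X$ be a compact subset of a real normed vector space $(V,\|\cdot\|)$. For all $u,v\in\Delta(X)$, $d_1(u,v)=d_2(u,v)=d_2^+(u,v)$.
   Context: $E=\mathcal C(X)$ is the space of continuous real functions on $X$. $\Delta(X)$ is the set of Borel probability measures on $X$, with $u(f)=\int f\,du$. - $D_1=\{f\in E:\ \forall x,y\in X,\ \forall a,b\ge 0,\ af(x)-bf(y)\le\|ax-by\|\}$, and $d_1(u,v)=\sup_{f\in D_1}\big(u(f)-v(f)\big)$. - $D_2=\{(f,g)\in E\times E:\ \forall x,y\in X,\ \forall a,b\ge0,\ af(x)+bg(y)\le\|ax-by\|\}$, and $d_2(u,v)=\sup_{(f,g)\in D_2}\big(u(f)+v(g)\big)$. - For $\varepsilon>0$, $D_2^\varepsilon=\{(f,g)\in E\times E:\ \forall x,y\in X,\ \forall a,b\in[0,1],\ af(x)+bg(y)\le\varepsilon+\|ax-by\|\}$ and $d_2^\varepsilon(u,v)=\sup_{(f,g)\in D_2^\varepsilon}\big(u(f)+v(g)\big)$. Then $d_2^+(u,v)=\inf_{\varepsilon>0}d_2^\varepsilon(u,v)$. *)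

(* Defs.v *)
From HB Require Import structures.
From mathcomp Require Import all_boot all_order all_algebra.
From mathcomp Require Import all_classical all_reals all_analysis.
Set Implicit Arguments. Unset Strict Implicit. Unset Printing Implicit Defensive.
Import Order.TTheory GRing.Theory Num.Theory.
Import numFieldNormedType.Exports.
Local Open Scope classical_set_scope.
Local Open Scope ring_scope.

Definition borelType (R : realType) (V : normedModType R) : Type :=
  g_sigma_algebraType (@open V).

Section Dists.
Variables (R : realType) (V : normedModType R) (X : set V).

(* E = C(X): real functions on V considered only through their restriction
   to X, which must be continuous on X (subspace topology). *)
Definition CX (f : V -> R) : Prop := {within X, continuous f}.

(* u(f) = \int f du, for a probability measure on X (viewed as a Borel
   probability measure on V concentrated on X). *)
Definition ev (u : probability (borelType V) R) (f : V -> R) : \bar R :=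
  (\int[u]_(x in X) (f x)%:E)%E.

Definition D1 : set (V -> R) :=
  [set f | CX f /\ forall x y, X x -> X y -> forall a b : R, 0 <= a -> 0 <= b ->
     a * f x - b * f y <= `| a *: x - b *: y |].

Definition d1 (u v : probability (borelType V) R) : \bar R :=
  ereal_sup [set (ev u f - ev v f)%E | f in D1].

Definition D2 : set ((V -> R) * (V -> R)) :=
  [set fg | CX fg.1 /\ CX fg.2 /\ forall x y, X x -> X y -> forall a b : R,
     0 <= a -> 0 <= b -> a * fg.1 x + b * fg.2 y <= `| a *: x - b *: y |].

Definition d2 (u v : probability (borelType V) R) : \bar R :=
  ereal_sup [set (ev u fg.1 + ev v fg.2)%E | fg in D2].

Definition D2eps (eps : R) : set ((V -> R) * (V -> R)) :=
  [set fg | CX fg.1 /\ CX fg.2 /\ forall x y, X x -> X y -> forall a b : R,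
     0 <= a <= 1 -> 0 <= b <= 1 ->
     a * fg.1 x + b * fg.2 y <= eps + `| a *: x - b *: y |].

Definition d2eps (eps : R) (u v : probability (borelType V) R) : \bar R :=
  ereal_sup [set (ev u fg.1 + ev v fg.2)%E | fg in D2eps eps].

Definition d2plus (u v : probability (borelType V) R) : \bar R :=
  ereal_inf [set d2eps eps u v | eps in [set e : R | 0 < e]].

End Dists.

(* Main.v *)
Require Import Defs.
From HB Require Import structures.
From mathcomp Require Import all_boot all_order all_algebra.
From mathcomp Require Import all_classical all_reals all_analysis.
From mathcomp Require Import lra ring.
Import Order.TTheory GRing.Theory Num.Theory.
Import numFieldNormedType.Exports.
Local Open Scope classical_set_scope.
Local Open Scope ring_scope.

Section H.
Variables (R : realType) (V : normedModType R) (X : set V) (hX : compact X).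

Lemma open_meas (W : set V) : open W -> measurable (W : set (borelType V)).
Proof. by move=> oW; apply: sub_sigma_algebra. Qed.

Lemma X_meas : measurable (X : set (borelType V)).
Proof.
have cX : closed X by apply: compact_closed => //; exact: hausdorff_normed.
rewrite -[X]setCK; apply: measurableC; apply: open_meas.
exact: closed_openC.
Qed.

Lemma CX_meas (f : V -> R) : CX X f -> measurable_fun (X : set (borelType V)) f.
Proof.
move=> /continuousP cf.
apply: (measurability _ (measurable_realfun.RGenOpens.measurableE R)).
move=> _ [_ [a [b ->] <-]].
have /open_subspaceP [W oW WX] := cf _ (@interval_open R (BRight a) (BLeft b) erefl erefl).
rewrite setIC -WX; apply: measurableI; [exact: open_meas | exact: X_meas].
Qed.

Lemma CXN f : CX X f -> CX X (fun x => - f x).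
Proof. by move=> cf x; apply: cvgN; exact: cf. Qed.

Lemma CXBc f c : CX X f -> CX X (fun x => f x - c).
Proof. by move=> cf x; apply: cvgB; [exact: cf| exact: cvg_cst]. Qed.

Variable P : probability (borelType V) R.

Lemma CX_int f : CX X f -> P.-integrable X (EFin \o f).
Proof.
move=> cf; apply: measurable_bounded_integrable.
- exact: X_meas.
- by rewrite (le_lt_trans (probability_le1 _ X_meas))// ltry.
- exact: CX_meas.
- have /compact_bounded[M [_ mrt]] := continuous_compact cf hX.
  by exists M; split; rewrite ?num_real // => ? ? ? ?; exact: mrt.
Qed.

Lemma ev_fin f : CX X f -> ev X P f \is a fin_num.
Proof. by move=> cf; apply: integrable_fin_num; [exact: X_meas| exact: CX_int]. Qed.

Lemma evN f : CX X f -> ev X P (fun x => - f x) = (- ev X P f)%E.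
Proof.
move=> cf; rewrite /ev; under eq_integral do rewrite EFinN.
by apply: integralN; apply: (integrable_add_def X_meas); exact: (CX_int f cf).
Qed.

Lemma ev_le f g : CX X f -> CX X g -> (forall x, X x -> f x <= g x) ->
  (ev X P f <= ev X P g)%E.
Proof.
move=> cf cg fg; apply: (le_integral X_meas); [exact: (CX_int f cf) | exact: (CX_int g cg)|].
by move=> x /set_mem Xx; rewrite lee_fin fg.
Qed.

Lemma evBc f c : CX X f -> P X = 1%E -> ev X P (fun x => f x - c) = (ev X P f - c%:E)%E.
Proof.
move=> cf PX; rewrite /ev; under eq_integral do rewrite EFinB.
rewrite (integralB_EFin X_meas (CX_int f cf)); last first.
  apply: (CX_int (fun=> c)) => x; exact: cvg_cst.
have := integral_cst P X_meas c%:E; rewrite /cst => ->.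
do 2 f_equal; rewrite -[RHS]mule1; f_equal; exact: PX.
Qed.
End H.

Section Hsec.
Variables (R : realType) (V : normedModType R) (X : set V) (f : V -> R).
Hypothesis hf : forall x, X x -> f x <= `|x|.

Definition Hs (z : V) : set R :=
  [set r | r = - `|z| \/ exists a x, 0 <= a /\ X x /\ r = a * f x - `|a *: x - z|].
Definition H z := sup (Hs z).

Lemma Hs_ub z : ubound (Hs z) `|z|.
Proof.
move=> r [->|[a [x [a0 [Xx ->]]]]]; first by have := normr_ge0 z; lra.
have h1 : a * f x <= `|a *: x| by rewrite normrZ ger0_norm // ler_wpM2l // hf.
have h2 : `|a *: x| <= `|a *: x - z| + `|z|.
  by rewrite -[X in `|X| <= _](subrK z) ler_normD.
lra.
Qed.

Lemma Hs_ne z : Hs z !=set0.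
Proof. by exists (- `|z|); left. Qed.

Lemma Hs_has z : has_ubound (Hs z).
Proof. by exists `|z|; exact: Hs_ub. Qed.

Lemma H_ge z a x : 0 <= a -> X x -> a * f x - `|a *: x - z| <= H z.
Proof. move=> a0 Xx; apply: ub_le_sup (Hs_has z) _ _; right; by exists a, x. Qed.

Lemma H_geN z : - `|z| <= H z.
Proof. by apply: ub_le_sup (Hs_has z) _ _; left. Qed.

Lemma H_le z : H z <= `|z|.
Proof. exact: ge_sup (Hs_ne z) (Hs_ub z). Qed.

Lemma H_lip z w : H z <= H w + `|z - w|.
Proof.
apply: ge_sup (Hs_ne z) _ => r [->|[a [x [a0 [Xx ->]]]]].
  have := H_geN w; have : `|w| <= `|z| + `|w - z|.
    by rewrite -[X in `|X| <= _](subrK z) addrC ler_normD.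
  rewrite distrC; lra.
have := H_ge w a x a0 Xx.
have : `|a *: x - w| <= `|a *: x - z| + `|z - w|.
  by rewrite [X in `|X|](_ : _ = (a *: x - z) + (z - w)) ?ler_normD // addrA subrK.
lra.
Qed.

Lemma H_cont : continuous H.
Proof.
move=> z; apply/cvgrPdist_lt => e e0.
apply/nbhs_ballP; exists e => // w; rewrite -ball_normE /= => zw.
have := H_lip z w; have := H_lip w z; rewrite (distrC w z).
rewrite ltr_norml in zw *.
move=> h1 h2; have ? := normr_ge0 (z - w).
lra.
Qed.

Lemma H_scale_le k z : 0 < k -> k * H z <= H (k *: z).
Proof.
move=> k0; rewrite mulrC -ler_pdivlMr //.
apply: ge_sup (Hs_ne z) _ => r [->|[a [x [a0 [Xx ->]]]]]; rewrite ler_pdivlMr //.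
  have := H_geN (k *: z); rewrite normrZ gtr0_norm // mulNr (mulrC `|z|); lra.
have := H_ge (k *: z) (k * a) x (mulr_ge0 (ltW k0) a0) Xx.
rewrite -scalerA -scalerBr normrZ gtr0_norm //.
have -> : (a * f x - `|a *: x - z|) * k = k * a * f x - k * `|a *: x - z| by ring.
by [].
Qed.

Lemma H0 : H 0 = 0.
Proof.
apply/le_anti; have := H_le 0; have := H_geN 0; rewrite normr0; lra.
Qed.

Lemma H_scale k z : 0 <= k -> k * H z = H (k *: z).
Proof.
rewrite le0r => /orP[/eqP->|k0]; first by rewrite mul0r scale0r H0.
apply/le_anti; rewrite H_scale_le //=.
have k10 : 0 < k^-1 by rewrite invr_gt0.
have := H_scale_le k^-1 (k *: z) k10; rewrite scalerA mulVf ?gt_eqF // scale1r.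
by rewrite -(ler_pM2l k0) mulrA mulfV ?gt_eqF // mul1r.
Qed.

Lemma H_D1 : D1 X H.
Proof.
split; first by apply: continuous_subspaceT; exact: H_cont.
move=> x y Xx Xy a b a0 b0; rewrite (H_scale a x a0) (H_scale b y b0).
have := H_lip (a *: x) (b *: y); lra.
Qed.

Lemma H_ge_f x : X x -> f x <= H x.
Proof. by move=> Xx; have := H_ge x 1 x ler01 Xx; rewrite scale1r subrr normr0 subr0 mul1r. Qed.

Lemma H_le_g (g : V -> R) y : X y ->
  (forall x, X x -> forall a, 0 <= a -> a * f x + g y <= `| a *: x - y |) ->
  H y <= - g y.
Proof.
move=> Xy hg; apply: ge_sup (Hs_ne y) _ => r [->|[a [x [a0 [Xx ->]]]]].
  have := hg y Xy 0 (lexx 0); rewrite mul0r add0r scale0r sub0r normrN; lra.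
have := hg x Xx a a0; lra.
Qed.
End Hsec.

Section Main.
Variables (R : realType) (V : normedModType R) (X : set V) (hX : compact X).

Lemma D2eps_D2 eps f g : 0 < eps -> D2eps X eps (f, g) ->
  D2 X (fun x => f x - eps, fun x => g x - eps).
Proof.
move=> e0 [cf [cg h]]; split; first exact: CXBc.
split; first exact: CXBc.
move=> x y Xx Xy a b a0 b0 /=.
have [ba|ab] := lerP b a.
  have [ae|apos] := eqVneq a 0.
    rewrite ae in ba *.
    have -> : b = 0 by apply/le_anti; rewrite b0 ba.
    by rewrite !mul0r !scale0r subrr normr0 addr0.
  have a0' : 0 < a by rewrite lt0r apos a0.
  have h11 : 0 <= GRing.one R <= 1 by rewrite ler01 lexx.
  have hb1 : 0 <= b / a <= 1 by rewrite divr_ge0 //= ler_pdivrMr // mul1r.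
  have := h x y Xx Xy 1 (b / a) h11 hb1 => /=.
  rewrite mul1r scale1r => H1.
  have E : a *: (x - (b / a) *: y) = a *: x - b *: y.
    by rewrite scalerBr scalerA mulrCA mulfV // mulr1.
  have := normrZ a (x - (b / a) *: y); rewrite E gtr0_norm // => E2.
  have E3 : a * (f x + b / a * g y) = a * f x + b * g y by field.
  have := ler_wpM2l (ltW a0') H1; rewrite E3 mulrDr -E2.
  have := mulr_ge0 b0 (ltW e0); lra.
have b0' : 0 < b by apply: le_lt_trans ab.
have ha1 : 0 <= a / b <= 1 by rewrite divr_ge0 //= ler_pdivrMr // mul1r ltW.
have h11 : 0 <= GRing.one R <= 1 by rewrite ler01 lexx.
have := h x y Xx Xy (a / b) 1 ha1 h11 => /=.
rewrite mul1r scale1r => H1.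
have E : b *: ((a / b) *: x - y) = a *: x - b *: y.
  by rewrite scalerBr scalerA mulrCA mulfV ?gt_eqF // mulr1.
have := normrZ b ((a / b) *: x - y); rewrite E gtr0_norm // => E2.
have E3 : b * (a / b * f x + g y) = a * f x + b * g y by field; rewrite gt_eqF.
have := ler_wpM2l (ltW b0') H1; rewrite E3 mulrDr -E2.
have := mulr_ge0 a0 (ltW e0); lra.
Qed.

Local Open Scope ereal_scope.

Lemma le12 u v : d1 X u v <= d2 X u v.
Proof.
apply: ge_ereal_sup => _ [f [cf hf] <-].
apply: ereal_sup_ubound; exists (f, fun x => (- f x)%R).
  split; [exact: cf | split; [exact: CXN |]] => x y Xx Xy a b a0 b0 /=.
  by rewrite mulrN; exact: hf.
by rewrite /= (evN _ _ _ hX v _ cf).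
Qed.

Lemma le21 u v : d2 X u v <= d1 X u v.
Proof.
apply: ge_ereal_sup => _ [[f g] [cf [cg hfg]] <-] /=.
move: cf cg hfg => /= cf cg hfg.
have hf : forall x, X x -> (f x <= `|x|)%R.
  move=> x Xx; have := hfg x x Xx Xx 1%R 0%R ler01 (lexx 0%R).
  by rewrite mul0r addr0 mul1r scale0r subr0 scale1r.
have D1H := H_D1 _ _ _ _ hf.
have cH : CX X (H R V X f) by case: D1H.
apply: le_trans (ereal_sup_ubound _); last by exists (H R V X f).
apply: leeD.
  by apply: ev_le => // x Xx; exact: H_ge_f.
rewrite -(evN _ _ _ hX v _ cH); apply: ev_le => //; first exact: CXN.
move=> y Xy; rewrite lerNr; apply: (H_le_g R V X f g y Xy) => x Xx a a0.
by have := hfg x y Xx Xy a 1%R a0 ler01; rewrite mul1r scale1r.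
Qed.

Lemma le2p u v : d2 X u v <= d2plus X u v.
Proof.
apply/ereal_infP => _ [e e0 <-].
apply: ereal_sup_le => _ [[f g] [cf [cg h]] <-]; exists (f, g) => //.
split => //; split => // x y Xx Xy a b /andP[a0 _] /andP[b0 _].
by apply: (le_trans (h x y Xx Xy a b a0 b0)); rewrite lerDr ltW.
Qed.

Lemma lep2 (u v : probability (borelType V) R) : u X = 1 -> v X = 1 -> d2plus X u v <= d2 X u v.
Proof.
move=> hu hv; apply/lee_addgt0Pr => e e0.
have e20 : (0 < e / 2)%R by rewrite divr_gt0.
apply: (@le_trans _ _ (d2eps X (e / 2)%R u v)).
  by apply: ereal_inf_lbound; exists (e / 2)%R.
apply: ge_ereal_sup => _ [[f g] hfg <-] /=.
have D := D2eps_D2 (e / 2)%R f g e20 hfg.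
case: hfg => /= cf [cg _].
have Ef : ev X u f = ev X u (fun x => f x - e / 2)%R + (e / 2)%:E.
  by rewrite (evBc _ _ _ hX u _ _ cf hu) subeK.
have Eg : ev X v g = ev X v (fun x => g x - e / 2)%R + (e / 2)%:E.
  by rewrite (evBc _ _ _ hX v _ _ cg hv) subeK.
rewrite Ef Eg addeACA -EFinD -splitr; apply: leeD2r.
by apply: ereal_sup_ubound; exists (fun x => f x - e / 2, fun x => g x - e / 2)%R.
Qed.
End Main.

Theorem proposition1 (R : realType) (V : normedModType R) (X : set V)
  (hX : compact X) (u v : probability (borelType V) R)
  (hu : u X = 1%E) (hv : v X = 1%E) :
  d1 X u v = d2 X u v /\ d2 X u v = d2plus X u v.
Proof.
split; apply/le_anti.
  by apply/andP; split; [exact: (le12 _ _ _ hX) | exact: (le21 _ _ _ hX)].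
by apply/andP; split; [exact: le2p | exact: (lep2 _ _ _ hX)].
Qed.
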